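(* If $G$ is a connected $P_4$-free graph and $G\neq K_2$, then $\gamma(G)=\gamma_{\rm cer}(G)$.
   Context: All graphs are finite and simple. A graph is $P_4$-free if it has no induced subgraph isomorphic to the path $P_4$ on four vertices. A set $D\subseteq V_G$ is a dominating set of $G$ if every vertex of $V_G-D$ has a neighbor in $D$; $\gamma(G)$ is the minimum cardinality of a dominating set. A set $D\subseteq V_G$ is a certified dominating set of $G$ if $D$ is a dominating set of $G$ and every vertex of $D$ has either zero or at least two neighbors in $V_G-D$; $\gamma_{\rm cer}(G)$ is the minimum cardinality of a certified dominating set of $G$. *)

(* Defs.v *)
From mathcomp Require Import all_boot.
Set Implicit Arguments. Unset Strict Implicit. Unset Printing Implicit Defensive.

Definition simple_graph (T : finType) (e : rel T) : Prop :=
  symmetric e /\ irreflexive e.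

Definition connected_graph (T : finType) (e : rel T) : Prop :=
  forall x y : T, connect e x y.

(* Induced P4: a-b-c-d path, with no chords ac, bd, ad (distinctness follows
   from irreflexivity but is stated explicitly). *)
Definition P4_free (T : finType) (e : rel T) : Prop :=
  ~ exists a b c d : T,
      [/\ uniq [:: a; b; c; d],
          [&& e a b, e b c & e c d] &
          [&& ~~ e a c, ~~ e b d & ~~ e a d]].

Definition is_K2 (T : finType) (e : rel T) : Prop :=
  #|T| = 2 /\ forall x y : T, x != y -> e x y.

Definition dominating (T : finType) (e : rel T) (D : {set T}) : bool :=
  [forall v, (v \notin D) ==> [exists u in D, e v u]].

Definition ext_deg (T : finType) (e : rel T) (D : {set T}) (v : T) : nat :=
  #|[set u | (u \notin D) && e v u]|.

Definition certified_dominating (T : finType) (e : rel T) (D : {set T}) : bool :=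
  dominating e D &&
  [forall v in D, (ext_deg e D v == 0) || (2 <= ext_deg e D v)].

(* minimum cardinalities; V(G) itself is (certified) dominating, so #|T| is a valid default *)
Definition gamma (T : finType) (e : rel T) : nat :=
  \big[minn/#|T|]_(D : {set T} | dominating e D) #|D|.

Definition gamma_cer (T : finType) (e : rel T) : nat :=
  \big[minn/#|T|]_(D : {set T} | certified_dominating e D) #|D|.

(* Main.v *)
Require Import Defs.
From mathcomp Require Import all_boot.

Lemma bigmin_le (T : finType) (P : pred {set T}) (f : {set T} -> nat) n D :
  P D -> \big[minn/n]_(X | P X) f X <= f D.
Proof.
move=> PD.
have : D \in index_enum {set T} by rewrite mem_index_enum.
elim: (index_enum _) => //= x s IH; rewrite inE big_cons => /orP [/eqP <- | Ds].
  by rewrite PD geq_minl.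
case: (P x); last exact: IH.
exact: leq_trans (geq_minr _ _) (IH Ds).
Qed.

Lemma le_bigmin (T : finType) (P : pred {set T}) (f : {set T} -> nat) n k :
  k <= n -> (forall D, P D -> k <= f D) -> k <= \big[minn/n]_(X | P X) f X.
Proof.
move=> kn H; apply: (big_ind (fun x => k <= x)) => //.
by move=> x y kx ky; rewrite leq_min kx ky.
Qed.

Lemma noP4 (T : finType) (e : rel T) : simple_graph e -> P4_free e ->
  forall a b c d : T, e a b -> e b c -> e c d -> ~~ e a c -> ~~ e b d -> ~~ e a d -> False.
Proof.
move=> [sym irr] H a b c d ab bc cd nac nbd nad; apply: H; exists a, b, c, d.
have ab' : a != b by apply: contraTneq ab => ->; rewrite irr.
have bc' : b != c by apply: contraTneq bc => ->; rewrite irr.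
have cd' : c != d by apply: contraTneq cd => ->; rewrite irr.
have ac : a != c by apply: contraTneq cd => eac; rewrite -eac.
have ad : a != d by apply: contraTneq cd => ead; rewrite -ead sym.
have bd : b != d by apply: contraTneq ab => ebd; rewrite ebd.
split; last by rewrite nac nbd nad.
  by rewrite /= !inE !negb_or ab' ac ad bc' bd cd'.
by rewrite ab bc cd.
Qed.

Lemma connect_ind (T : finType) (e : rel T) (S : pred T) v m :
  v \in S -> (forall x y, x \in S -> e x y -> y \in S) -> connect e v m -> m \in S.
Proof.
move=> vS cl /connectP [p pth ->].
elim: p v vS pth => [|y p IH] x xS //= /andP [exy pth].
apply: IH pth; exact: cl exy.
Qed.

Lemma diam2 (T : finType) (e : rel T) : simple_graph e -> connected_graph e -> P4_free e ->
  forall v m : T, m != v -> ~~ e v m -> exists w, e v w && e w m.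
Proof.
move=> sg con p4 v m mv nvm.
have [sym irr] := sg.
pose S : pred T := fun x => (x == v) || e v x || [exists w, e v w && e w x].
have : m \in S.
  apply: (@connect_ind T e S v m); last exact: con.
    by rewrite unfold_in /S eqxx.
  move=> x y; rewrite !unfold_in /S => Sx exy.
  case: (eqVneq y v) => [->|yv] /=; first by [].
  case evy: (e v y); first by [].
  rewrite /=.
  case: (eqVneq x v) Sx => [exv _ | xv]; first by rewrite exv evy in exy.
  rewrite /= => Sx.
  case evx: (e v x).
    by apply/existsP; exists x; rewrite evx exy.
  rewrite evx /= in Sx; case/existsP: Sx => w /andP [evw ewx].
  case ewy: (e w y).
    by apply/existsP; exists w; rewrite evw ewy.
  exfalso; apply: (@noP4 T e sg p4 y x w v).
  - by rewrite sym.
  - by rewrite sym.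
  - by rewrite sym.
  - by rewrite sym ewy.
  - by rewrite sym evx.
  - by rewrite sym evy.
rewrite unfold_in /S (negbTE mv) (negbTE nvm) /=.
by move/existsP.
Qed.

Lemma ext_degE (T : finType) (e : rel T) (D : {set T}) x :
  ext_deg e D x = #|[set y | e x y] :\: D|.
Proof. rewrite /ext_deg; apply: eq_card => y; by rewrite !inE andbC. Qed.

Lemma two_le (T : finType) (A : {set T}) a b : a \in A -> b \in A -> a != b -> 2 <= #|A|.
Proof.
move=> aA bA ab.
apply: leq_trans (subset_leq_card (_ : [set a; b] \subset A)).
  by rewrite cards2 ab.
by apply/subsetP => x; rewrite !inE => /orP[]/eqP->.
Qed.

Lemma ext_big (T : finType) (e : rel T) (D : {set T}) z : irreflexive e ->
  z \in D -> #|D| <= 2 -> 3 <= #|[set y | e z y]| -> 2 <= ext_deg e D z.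
Proof.
move=> irr zD D2 N3; rewrite ext_degE.
have h1 := cardsID D [set y | e z y].
have h2 : #|[set y | e z y] :&: D| <= #|D :\ z|.
  apply: subset_leq_card; apply/subsetP => y; rewrite !inE => /andP [ezy yD].
  rewrite yD andbT; apply: contraTneq ezy => ->; by rewrite irr.
have h3 := cardsD1 z D; rewrite zD in h3.
have h4 : #|[set y | e z y] :&: D| <= 1.
  apply: leq_trans h2 _; rewrite -ltnS -add1n -h3 //.
move: h1 N3; set a := #|_ :&: _|; set b := #|_ :\: _|; set c := #|_|.
move=> <- N3.
have h5 : a + b <= 1 + b by rewrite leq_add2r.
by have := leq_trans N3 h5; rewrite add1n ltnS.
Qed.

Lemma setT_cert (T : finType) (e : rel T) : certified_dominating e [set: T].
Proof.
apply/andP; split; apply/forallP => x; first by rewrite in_setT.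
apply/implyP => _; rewrite /ext_deg.
have -> : [set u | (u \notin [set: T]) && e x u] = set0 by apply/setP => u; rewrite !inE.
by rewrite cards0.
Qed.

Theorem theorem2p7 (T : finType) (e : rel T) :
  simple_graph e -> connected_graph e -> P4_free e -> ~ is_K2 e ->
  gamma e = gamma_cer e.
Proof.
move=> sg con p4 nK2; have [sym irr] := sg.
have capT : gamma_cer e <= #|T|.
  by rewrite -cardsT; apply: bigmin_le; exact: setT_cert.
have dom_ge : gamma e <= gamma_cer e.
  apply: le_bigmin.
    by rewrite -cardsT; apply: bigmin_le; case/andP: (@setT_cert T e).
  by move=> D /andP [Dd _]; apply: bigmin_le.
apply/eqP; rewrite eqn_leq dom_ge /=.
case: (pickP (@predT T)) => [x0 _ | T0]; last first.
  have cT : #|T| = 0 by apply: eq_card0.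
  by rewrite cT in capT; apply: leq_trans capT _.
have domx0 : forall D, dominating e D -> 0 < #|D|.
  move=> D Dd; apply/card_gt0P.
  case: (boolP (x0 \in D)) => [h|h]; first by exists x0.
  move/forallP/(_ x0): Dd; rewrite h /= => /existsP [z /andP [zD _]]; by exists z.
have Tgt0 : 0 < #|T| by apply/card_gt0P; exists x0.
case: (boolP [exists u, [forall y, (y != u) ==> e u y]]) => [/existsP [u /forallP univ] | nu].
  have univ' : forall y, y != u -> e u y by move=> y yu; move/implyP: (univ y); apply.
  apply: (@leq_trans 1).
    rewrite -(cards1 u); apply: bigmin_le; apply/andP; split.
      apply/forallP => y; apply/implyP; rewrite inE => yu.
      by apply/existsP; exists u; rewrite inE eqxx sym univ'.
    apply/forallP => z; apply/implyP; rewrite inE => /eqP ->.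
    rewrite /ext_deg.
    have -> : [set y | (y \notin [set u]) && e u y] = [set~ u].
      apply/setP => y; rewrite !inE; case: (eqVneq y u) => //= yu; exact: univ'.
    rewrite cardsC1.
    case: (eqVneq #|T| 2) => [T2|T2].
      exfalso; apply: nK2; split => // x y xy.
      case: (eqVneq x u) => [exu|xu]; first by rewrite exu; apply: univ'; rewrite eq_sym -exu.
      case: (eqVneq y u) => [->|yu]; first by rewrite sym univ'.
      have := @two_le T [set~ u] x y; rewrite cardsC1 T2 !inE => /(_ xu yu xy).
      by [].
    by move: T2 Tgt0; case: #|T| => [|[|[|k]]].
  apply: le_bigmin => // D Dd; exact: domx0.
have nuP : forall u, exists y, (y != u) && ~~ e u y.
  move=> u; move: nu; rewrite negb_exists => /forallP/(_ u).
  rewrite negb_forall => /existsP [y]; rewrite negb_imply => h; by exists y.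
apply: (@leq_trans 2); last first.
  apply: le_bigmin.
    have [y /andP [yx _]] := nuP x0.
    by rewrite -cardsT; apply: (@two_le T _ y x0); rewrite ?in_setT.
  move=> D Dd.
  have /card_gt0P [z zD] := domx0 D Dd.
  have [y /andP [yz nzy]] := nuP z.
  case: (boolP (y \in D)) => [yD|yD]; first exact: two_le yD zD yz.
  move/forallP/(_ y): Dd; rewrite yD /= => /existsP [u /andP [uD eyu]].
  apply: (@two_le T D u z uD zD); apply: contraTneq eyu => ->; by rewrite sym.
pose N x := [set y | e x y].
have [v _ vmax] := @arg_maxnP T x0 xpredT (fun x => #|N x|) isT.
have [m0 /andP [m0v nvm0]] := nuP v.
pose M := [set x | (x != v) && ~~ e v x].
have m0M : m0 \in M by rewrite inE m0v nvm0.
have [m mM mmin] := @arg_minnP T m0 (fun x => x \in M) (fun x => #|N x :&: N v|) m0M.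
move: mM; rewrite inE => /andP [mv nvm].
have [w /andP [evw ewm]] := @diam2 T e sg con p4 v m mv nvm.
have wall : forall x, x \in M -> e w x.
  move=> x xM; move: (xM); rewrite inE => /andP [xv nvx].
  case: (eqVneq x m) => [->//|xm]; apply/negPn/negP => nwx.
  have := mmin x xM; rewrite leqNgt => /negP; apply; apply: proper_card.
  rewrite properE; apply/andP; split.
    apply/subsetP => w'; rewrite !inE => /andP [exw' evw']; rewrite evw' andbT.
    apply/negPn/negP => nmw'.
    case exm: (e x m).
      apply: (@noP4 T e sg p4 x m w v) => //; do ?[done | by rewrite sym | by rewrite sym exm | by rewrite eww' | by rewrite sym eww'].
    case eww': (e w w').
      apply: (@noP4 T e sg p4 m w w' x) => //; do ?[done | by rewrite sym | by rewrite sym exm | by rewrite eww' | by rewrite sym eww'].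
    apply: (@noP4 T e sg p4 m w v w') => //; do ?[done | by rewrite sym | by rewrite sym exm | by rewrite eww' | by rewrite sym eww'].
  apply/subsetPn; exists w; first by rewrite !inE (sym m w) ewm evw.
  by rewrite !inE (sym x w) (negbTE nwx).
have wv : w != v by apply: contraTneq evw => ->; rewrite irr.
have wm : w != m by apply: contraTneq evw => ->.
case: (leqP 3 #|N w|) => [w3 | w2].
  apply: (@leq_trans #|[set v; w]|); last by rewrite cards2 ltnS leq_b1.
  apply: bigmin_le; apply/andP; split.
    apply/forallP => y; apply/implyP; rewrite !inE negb_or => /andP [yv yw].
    case evy: (e v y).
      by apply/existsP; exists v; rewrite !inE eqxx sym evy.
    apply/existsP; exists w; rewrite !inE eqxx orbT sym /=.
    by apply: wall; rewrite inE yv evy.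
  have D2 : #|[set v; w]| <= 2 by rewrite cards2 ltnS leq_b1.
  apply/forallP => z; apply/implyP => zD; apply/orP; right.
  apply: (@ext_big T e _ z irr zD D2).
  move: zD; rewrite !inE => /orP [] /eqP ->.
    exact: leq_trans w3 (vmax w isT).
  exact: w3.
have vmN : [set v; m] \subset N w.
  by apply/subsetP => y; rewrite !inE => /orP [] /eqP ->; rewrite ?ewm // sym.
have Nw : N w = [set v; m].
  apply/eqP; rewrite eq_sym eqEcard vmN /= cards2 eq_sym (negbTE mv).
  by rewrite -ltnS.
have Nv2 : 2 <= #|N v|.
  apply: leq_trans (vmax w isT); apply: (@two_le _ _ v m); [by rewrite Nw !inE eqxx | by rewrite Nw !inE eqxx orbT | by rewrite eq_sym].
have /card_gt0P [w' w'N] : 0 < #|N v :\ w|.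
  have := cardsD1 w (N v); rewrite inE evw => h.
  by move: Nv2; rewrite h add1n ltnS.
move: w'N; rewrite !inE => /andP [w'w evw'].
have w'v : w' != v by apply: contraTneq evw' => ->; rewrite irr.
have w'm : w' != m by apply: contraTneq evw' => ->.
have emw' : e m w'.
  apply/negPn/negP => nmw'.
  have : w' \notin N w by rewrite Nw !inE negb_or w'v w'm.
  rewrite inE => nww'.
  by apply: (@noP4 T e sg p4 m w v w') => //; rewrite sym.
apply: (@leq_trans #|[set v; m]|); last by rewrite cards2 ltnS leq_b1.
apply: bigmin_le; apply/andP; split.
  apply/forallP => y; apply/implyP; rewrite !inE negb_or => /andP [yv ym].
  case evy: (e v y).
    by apply/existsP; exists v; rewrite !inE eqxx sym evy.
  have : e w y by apply: wall; rewrite inE yv evy.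
  have : y \notin N w by rewrite Nw !inE negb_or yv ym.
  by rewrite inE => /negbTE ->.
apply/forallP => z; apply/implyP; rewrite !inE => /orP [] /eqP ->;
  apply/orP; right; rewrite ext_degE.
  by apply: (@two_le _ _ w w'); rewrite ?(eq_sym w w') ?w'w // !inE negb_or ?wv ?wm ?w'v ?w'm ?evw ?evw'.
by apply: (@two_le _ _ w w'); rewrite ?(eq_sym w w') ?w'w // !inE negb_or ?wv ?wm ?w'v ?w'm ?(sym m w) ?ewm ?emw'.
Qed.
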